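(* Let $c=1$, $\lambda_1,\lambda_2,\mu_1,\mu_2>0$, $\lambda=\lambda_1+\lambda_2$, let $X$ be the Markov chain described in the context and fix $\alpha$ with $\mathrm{Re}\,\alpha>0$. Then the scalar $G(\alpha)$ satisfies $$(\lambda+\mu_1+\alpha)G(\alpha)=\mu_1+\lambda_1G(\alpha)^2+\lambda_2G(\alpha)\,\phi_{\lambda_2,\mu_2}\bigl(\lambda_1(1-G(\alpha))+\alpha\bigr).$$
   Context: With $c=1$, the Markov chain $X$ on $\mathbb{N}_0^2$ has only nonzero off-diagonal rates $q((i,j),(i+1,j))=\lambda_1$, $q((i,j),(i,j+1))=\lambda_2$ ($i,j\ge0$), $q((i,0),(i-1,0))=\mu_1$ ($i\ge1$), $q((i,j),(i,j-1))=\mu_2$ ($j\ge1$) (single-server queue with two classes, class 2 preemptive priority). For $A\subset\mathbb{N}_0^2$, $\tau_A=\inf\{t>0:X(t^-)\ne X(t)\in A\}$; $E_z$ is expectation given $X(0)=z$. $G(\alpha)=E_{(i+1,0)}[e^{-\alpha\tau_{\{(i,0)\}}}]$, which does not depend on $i\ge0$. For $\lambda',\mu'>0$, $\phi_{\lambda',\mu'}(s)=\frac{\lambda'+\mu'+s-\sqrt{(\lambda'+\mu'+s)^2-4\lambda'\mu'}}{2\lambda'}$ is the Laplace–Stieltjes transform of the busy period of an $M/M/1$ queue (arrival rate $\lambda'$, service rate $\mu'$) started by one customer. *)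

(* Defs.v *)
From mathcomp Require Import all_boot all_order all_algebra.
From mathcomp Require Import complex.
From mathcomp Require Import all_classical all_reals all_analysis.
Import numFieldNormedType.Exports.

Set Implicit Arguments.
Unset Strict Implicit.
Unset Printing Implicit Defensive.

Import Order.TTheory GRing.Theory Num.Theory.
Local Open Scope ring_scope.
Local Open Scope complex_scope.
Local Open Scope classical_set_scope.

Definition state := (nat * nat)%type.

Section Chain.
Variable R : realType.
Variables (lam1 lam2 mu1 mu2 : R).

(* Off-diagonal transition rates q(x,y) of the two-class preemptive-priority
   single-server queue (c = 1). *)
Definition rate (x y : state) : R :=
  let: (i, j) := x in
    (if y == (i.+1, j) then lam1 else 0)
  + (if y == (i, j.+1) then lam2 else 0)
  + (if [&& j == 0%N, (0 < i)%N & y == (i.-1, 0%N)] then mu1 else 0)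
  + (if (0 < j)%N && (y == (i, j.-1)) then mu2 else 0).

(* A list containing every state reachable in one jump from x (possibly with
   extra entries of rate 0, namely x itself, which contribute nothing). *)
Definition neighbours (x : state) : seq state :=
  let: (i, j) := x in [:: (i.+1, j); (i, j.+1); (i.-1, j); (i, j.-1)].

Definition qtot (x : state) : R := \sum_(y <- neighbours x) rate x y.

(* Contribution of one jump x -> y to E[e^{-alpha * (holding time)} ; jump to y]:
   (jump-chain probability q(x,y)/q(x)) * (LST q(x)/(q(x)+alpha) of the
   exponential(q(x)) holding time). *)
Definition jumpw (alpha : R[i]) (x y : state) : R[i] :=
  ((rate x y / qtot x)%:C) * ((qtot x)%:C / ((qtot x)%:C + alpha)).

(* hitLST_upto n A alpha x = E_x[ e^{-alpha tau_A} ; tau_A is reached within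
   the first n jumps ], where tau_A = inf{t > 0 : X(t-) <> X(t) in A}, computed
   from the jump-chain / exponential-holding-time construction of X. *)
Fixpoint hitLST_upto (n : nat) (A : pred state) (alpha : R[i]) (x : state)
  : R[i] :=
  match n with
  | 0 => 0
  | n'.+1 => \sum_(y <- neighbours x)
               jumpw alpha x y * (if A y then 1 else hitLST_upto n' A alpha y)
  end.

(* hitLST A alpha z g  <->  g = E_z[ e^{-alpha tau_A} ]  (with e^{-alpha tau_A}
   = 0 on {tau_A = +oo}, Re alpha > 0), obtained as the limit, as n -> oo, of the
   expectation restricted to {tau_A within n jumps} (monotone/dominated
   convergence); complex convergence is expressed componentwise. *)
Definition hitLST (A : pred state) (alpha : R[i]) (z : state) (g : R[i])
  : Prop :=
  (fun n => complex.Re (hitLST_upto n A alpha z)) @ \oo --> complex.Re g /\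
  (fun n => complex.Im (hitLST_upto n A alpha z)) @ \oo --> complex.Im g.

End Chain.

(* phi_{lam,mu}(s): LST of the M/M/1 busy period, with the principal complex
   square root sqrtc (nonnegative real part). *)
Definition phiBP (R : realType) (lam mu : R) (s : R[i]) : R[i] :=
  let b := lam%:C + mu%:C + s in
  (b - sqrtc (b ^+ 2 - 4%:R * lam%:C * mu%:C)) / (2%:R * lam%:C).

(* Main.v *)
Require Import Defs.
From mathcomp Require Import all_boot all_order all_algebra.
From mathcomp Require Import complex.
From mathcomp Require Import all_classical all_reals all_analysis.
From mathcomp Require Import lra ring zify.
Import numFieldNormedType.Exports.
Import Order.TTheory GRing.Theory Num.Theory.
Local Open Scope ring_scope.
Local Open Scope complex_scope.
Local Open Scope classical_set_scope.

Section C.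
Variable R : realType.
Variables lam1 lam2 mu1 mu2 : R.
Hypotheses (hl1 : 0 < lam1) (hl2 : 0 < lam2) (hm1 : 0 < mu1) (hm2 : 0 < mu2).
Definition nc (z : R[i]) : R := Normc.normc z.
Lemma nc_ge0 z : 0 <= nc z.
Proof. by case: z => a b; rewrite /nc /= sqrtr_ge0. Qed.
Lemma ncD z w : nc (z + w) <= nc z + nc w.
Proof. exact: le_normcD. Qed.
Lemma ncM z w : nc (z * w) = nc z * nc w.
Proof. exact: Normc.normcM. Qed.
Lemma nc_eq0 z : nc z = 0 -> z = 0.
Proof. exact: Normc.eq0_normc. Qed.
Lemma ncR (r : R) : nc r%:C = `|r|.
Proof. by rewrite /nc /= expr0n /= addr0 sqrtr_sqr. Qed.
Lemma nc_Re z : `|complex.Re z| <= nc z.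
Proof. case: z => a b; rewrite /nc /= -sqrtr_sqr ler_wsqrtr // lerDl sqr_ge0 //. Qed.
Lemma nc_Im z : `|complex.Im z| <= nc z.
Proof. case: z => a b; rewrite /nc /= -sqrtr_sqr ler_wsqrtr // lerDr sqr_ge0 //. Qed.
Lemma nc_ReIm z : nc z <= `|complex.Re z| + `|complex.Im z|.
Proof.
case: z => a b.
have -> : (a +i* b) = (a +i* 0) + (0 +i* b) by simpc.
apply: le_trans (ncD _ _) _.
by rewrite /nc /= !expr0n /= addr0 add0r !sqrtr_sqr addr0 add0r.
Qed.
Lemma ncN z : nc (- z) = nc z.
Proof. exact: normcN. Qed.
Lemma ncB z w : nc (z - w) = nc (w - z).
Proof. by rewrite -ncN opprB. Qed.
Lemma ncV z : nc (z^-1) = (nc z)^-1.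
Proof. exact: Normc.normcV. Qed.
Lemma nc_sum (I : Type) (s : seq I) (F : I -> R[i]) :
  nc (\sum_(y <- s) F y) <= \sum_(y <- s) nc (F y).
Proof.
elim: s => [|y s IH]; first by rewrite !big_nil /nc /= expr0n /= addr0 sqrtr0.
by rewrite !big_cons (le_trans (ncD _ _)) // lerD2l.
Qed.

Local Notation rt := (rate lam1 lam2 mu1 mu2).
Local Notation qt := (qtot lam1 lam2 mu1 mu2).
Ltac lra' := have := hl1; have := hl2; have := hm1; have := hm2; lra.

Ltac rtac := (try rewrite /rate); rewrite ?xpair_eqE;
  repeat match goal with
  | |- context [(?a == ?b)%N] =>
      (have -> : (a == b)%N = true by apply/eqP; lia) ||
      (have -> : (a == b)%N = false by apply/eqP; lia)
  | |- context [(0 < ?a)%N] =>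
      (have -> : (0 < a)%N = true by lia) ||
      (have -> : (0 < a)%N = false by lia)
  end; rewrite /= ?(addr0, add0r).

Lemma r0_1 k : rt (k.+1, 0%N) (k.+2, 0%N) = lam1. Proof. by rtac. Qed.
Lemma r0_2 k : rt (k.+1, 0%N) (k.+1, 1%N) = lam2. Proof. by rtac. Qed.
Lemma r0_3 k : rt (k.+1, 0%N) (k, 0%N) = mu1. Proof. by rtac. Qed.
Lemma r0_4 k : rt (k.+1, 0%N) (k.+1, 0%N) = 0. Proof. by rtac. Qed.
Lemma r1_1 k j : rt (k.+1, j.+1) (k.+2, j.+1) = lam1. Proof. by rtac. Qed.
Lemma r1_2 k j : rt (k.+1, j.+1) (k.+1, j.+2) = lam2. Proof. by rtac. Qed.
Lemma r1_3 k j : rt (k.+1, j.+1) (k, j.+1) = 0. Proof. by rtac. Qed.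
Lemma r1_4 k j : rt (k.+1, j.+1) (k.+1, j) = mu2. Proof. by rtac. Qed.
Lemma r_shift k j y1 y2 : rt (k.+2, j) (y1.+1, y2) = rt (k.+1, j) (y1, y2).
Proof. rewrite /rate !xpair_eqE !eqSS /=. done. Qed.
Lemma rate_ge0 x y : 0 <= rt x y.
Proof. case: x => i j; rewrite /rate /=; repeat case: ifP => _; lra'. Qed.
Lemma rate_le x y : rt x y <= lam1 + lam2 + mu1 + mu2.
Proof. case: x => i j; rewrite /rate /=; repeat case: ifP => _; lra'. Qed.
Lemma qt0 k : qt (k.+1, 0%N) = lam1 + lam2 + mu1.
Proof. rewrite /qtot /= !big_cons big_nil /=; rtac; ring. Qed.
Lemma qt1 k j : qt (k.+1, j.+1) = lam1 + lam2 + mu2.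
Proof. rewrite /qtot /= !big_cons big_nil /=; rtac; ring. Qed.
Lemma qt_shift k j : qt (k.+2, j) = qt (k.+1, j).
Proof.
case: j => [|j]; first by rewrite qt0 qt0.
by rewrite qt1 qt1.
Qed.
Lemma qt_ge x : lam1 <= qt x.
Proof.
case: x => i j; rewrite /qtot.
have -> : neighbours (i,j) = [:: (i.+1,j); (i,j.+1); (i.-1,j); (i,j.-1)] by [].
rewrite !big_cons big_nil.
have -> : rt (i, j) (i.+1, j) = lam1 + (rt (i, j) (i.+1, j) - lam1) by ring.
have : 0 <= rt (i, j) (i.+1, j) - lam1.
  rewrite /rate eqxx; repeat case: ifP => _; lra'.
have := rate_ge0 (i,j) (i, j.+1); have := rate_ge0 (i,j) (i.-1, j);
have := rate_ge0 (i,j) (i, j.-1); lra'.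
Qed.
Lemma qt_le x : qt x <= 4%:R * (lam1 + lam2 + mu1 + mu2).
Proof.
case: x => i j; rewrite /qtot.
have -> : neighbours (i,j) = [:: (i.+1,j); (i,j.+1); (i.-1,j); (i,j.-1)] by [].
rewrite !big_cons big_nil.
have := rate_le (i,j) (i.+1, j); have := rate_le (i,j) (i, j.+1); have := rate_le (i,j) (i.-1, j);
have := rate_le (i,j) (i, j.-1); lra'.
Qed.
Lemma nc0 : nc 0 = 0. Proof. exact: Normc.normc0. Qed.
Lemma nc1 : nc 1 = 1. Proof. exact: Normc.normc1. Qed.
Lemma ReB (z u : R[i]) : complex.Re (z - u) = complex.Re z - complex.Re u.
Proof. by case: z => a b; case: u => c d. Qed.
Lemma ImB (z u : R[i]) : complex.Im (z - u) = complex.Im z - complex.Im u.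
Proof. by case: z => a b; case: u => c d. Qed.
Lemma ReD (z u : R[i]) : complex.Re (z + u) = complex.Re z + complex.Re u.
Proof. by case: z => a b; case: u => c d. Qed.
Lemma ReR (r : R) : complex.Re r%:C = r. Proof. by []. Qed.
Lemma nc_geRe z : complex.Re z <= nc z.
Proof. exact: le_trans (ler_norm _) (nc_Re z). Qed.

Variable alpha : R[i].
Hypothesis halpha : 0 < complex.Re alpha.
Local Notation w := (jumpw lam1 lam2 mu1 mu2 alpha).
Local Notation a := (complex.Re alpha).
Ltac lra2 := have := halpha; lra'.
Definition QQ := 4%:R * (lam1 + lam2 + mu1 + mu2).
Definition rho := QQ / (QQ + a).

Lemma QQ_gt0 : 0 < QQ. Proof. rewrite /QQ; lra'. Qed.
Lemma rho_ge0 : 0 <= rho.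
Proof. have := QQ_gt0; rewrite /rho => h; apply: divr_ge0; lra2. Qed.
Lemma rho_lt1 : rho < 1.
Proof.
have := QQ_gt0 => h; rewrite /rho ltr_pdivrMr; last by have := halpha; lra'.
have := halpha; lra'.
Qed.
Lemma qt_gt0 x : 0 < qt x.
Proof. have := qt_ge x; lra'. Qed.
Lemma qa_neq0 x : (qt x)%:C + alpha != 0.
Proof.
apply/eqP => /(congr1 (@complex.Re R)); rewrite ReD ReR /=.
have := qt_gt0 x; have := halpha; lra'.
Qed.
Lemma qC_neq0 x : (qt x)%:C != 0 :> R[i].
Proof.
apply/eqP => /(congr1 (@complex.Re R)); rewrite ReR /=.
have := qt_gt0 x; lra'.
Qed.
Lemma w_eq x y : w x y = (rt x y)%:C / ((qt x)%:C + alpha).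
Proof.
rewrite /jumpw rmorphM fmorphV /=.
have h1 := qa_neq0 x; have h2 := qC_neq0 x.
field; by rewrite h1 h2.
Qed.
Lemma nc_qa x : qt x + a <= nc ((qt x)%:C + alpha).
Proof. by have := nc_geRe ((qt x)%:C + alpha); rewrite ReD ReR. Qed.
Lemma nc_w x y : nc (w x y) = rt x y / nc ((qt x)%:C + alpha).
Proof. by rewrite w_eq ncM ncV ncR ger0_norm // rate_ge0. Qed.
Lemma sum_w x : \sum_(y <- neighbours x) nc (w x y) <= rho.
Proof.
rewrite (eq_bigr _ (fun y _ => nc_w x y)) -big_distrl /=.
change (\sum_(y <- neighbours x) rt x y) with (qt x).
have hN := nc_qa x; have hq := qt_gt0 x; have hQ := qt_le x.
have ha := halpha; have hQ0 := QQ_gt0.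
rewrite -/QQ in hQ.
have hN0 : 0 < nc ((qt x)%:C + alpha) by lra'.
rewrite ler_pdivrMr // /rho mulrAC ler_pdivlMr; last by lra'.
nra.
Qed.
Lemma step_bound x (e : state -> R[i]) M : 0 <= M ->
  (forall y, y \in neighbours x -> w x y = 0 \/ nc (e y) <= M) ->
  nc (\sum_(y <- neighbours x) w x y * e y) <= rho * M.
Proof.
move=> hM H; apply: le_trans (nc_sum _ _ _) _.
apply: (@le_trans _ _ (\sum_(y <- neighbours x) nc (w x y) * M)).
  rewrite big_seq [X in _ <= X]big_seq; apply: ler_sum => y hy; rewrite ncM.
  case: (H y hy) => [->|h]; first by rewrite nc0 !mul0r.
  by apply: ler_wpM2l => //; exact: nc_ge0.
by rewrite -big_distrl /= ler_wpM2r // sum_w.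
Qed.
Lemma lim0 z K : (forall n, z <= K * rho ^+ n) -> z <= 0.
Proof.
move=> H.
have hr : `|rho| < 1 by rewrite ger0_norm ?rho_ge0 // rho_lt1.
have hc : K * rho ^+ n @[n --> \oo] --> (K * 0 : R).
  by apply: cvgMl_tmp; exact: cvg_expr.
rewrite mulr0 in hc.
apply: (ler_cvg_to (cvg_cst z) hc).
by apply: nearW => n; exact: H.
Qed.

Definition ee n := (1 - rho)^-1 * rho ^+ n.
Lemma ee_ge0 n : 0 <= ee n.
Proof.
have h1 := rho_lt1; have h0 := rho_ge0.
rewrite /ee mulr_ge0 ?exprn_ge0 // invr_ge0; lra.
Qed.
Lemma eeS n : ee n - ee n.+1 = rho ^+ n.
Proof.
have h1 := rho_lt1; rewrite /ee exprS.
have h : 1 - rho != 0 by apply/eqP; lra.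
by field.
Qed.
Lemma eeS_le n : ee n.+1 <= ee n.
Proof. have := eeS n; have := exprn_ge0 n rho_ge0; lra. Qed.

Lemma rhoS_le m : rho ^+ m.+1 <= rho ^+ m.
Proof. rewrite exprS; have := exprn_ge0 m rho_ge0; have := rho_lt1; have := rho_ge0; nra. Qed.

Definition limr (u : nat -> R) : R := sup (range (fun n => u n - ee n)).

Lemma real_lim u : (forall n, `|u n.+1 - u n| <= rho ^+ n) ->
  forall n, `|u n - limr u| <= ee n.
Proof.
move=> H.
pose c n := u n - ee n; pose b n := u n + ee n.
have cS n : c n <= c n.+1.
  have := H n; rewrite ler_norml => /andP[h1 h2].
  have := eeS n; rewrite /c; lra.
have bS n : b n.+1 <= b n.
  have := H n; rewrite ler_norml => /andP[h1 h2].
  have := eeS n; rewrite /b; lra.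
have cmono n k : c n <= c (n + k)%N.
  elim: k => [|k IH]; first by rewrite addn0.
  by apply: le_trans IH _; rewrite addnS.
have bmono n k : b (n + k)%N <= b n.
  elim: k => [|k IH]; first by rewrite addn0.
  by apply: le_trans _ IH; rewrite addnS.
have cb n m : c n <= b m.
  apply: le_trans (cmono n m) _; rewrite addnC.
  apply: le_trans _ (bmono m n).
  by rewrite /c /b; have := ee_ge0 (m + n)%N; lra.
have ne : range c !=set0 by exists (c 0%N); exists 0%N.
have ub m : ubound (range c) (b m) by move=> y [n _ <-]; exact: cb.
have hs : has_sup (range c) by split => //; exists (b 0%N); exact: ub.
have l1 n : c n <= limr u.
  by apply: sup_upper_bound => //; exists n.
have l2 n : limr u <= b n by apply: ge_sup.
move=> n; rewrite ler_norml; have := l1 n; have := l2 n; rewrite /c /b; lra.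
Qed.

Definition hh i n x := hitLST_upto lam1 lam2 mu1 mu2 n (pred1 (i, 0%N)) alpha x.
Definition HH i x : R[i] :=
  (limr (fun n => complex.Re (hh i n x))) +i* (limr (fun n => complex.Im (hh i n x))).

Lemma hh_S i n x : hh i n.+1 x =
  \sum_(y <- neighbours x) w x y * (if y == (i, 0%N) then 1 else hh i n y).
Proof. by []. Qed.
Lemma hh_0 i x : hh i 0 x = 0. Proof. by []. Qed.

Lemma hh_bound i n x : nc (hh i n x) <= 1.
Proof.
elim: n x => [|n IH] x; first by rewrite hh_0 nc0; lra.
rewrite hh_S; apply: (@le_trans _ _ (rho * 1)); last by have := rho_lt1; lra.
apply: step_bound => // y _; right; case: ifP => _; [by rewrite nc1 | exact: IH].
Qed.

Lemma hh_diff i n x : nc (hh i n.+1 x - hh i n x) <= rho ^+ n.+1.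
Proof.
elim: n x => [|n IH] x.
  rewrite hh_0 subr0 hh_S expr1.
  have -> : \sum_(y <- neighbours x) w x y * (if y == (i, 0%N) then 1 else hh i 0 y)
    = \sum_(y <- neighbours x) w x y * (if y == (i, 0%N) then 1 else 0) by [].
  rewrite -[X in _ <= X]mulr1; apply: step_bound => // y _; right.
  by case: ifP => _; rewrite ?nc1 ?nc0 //; lra.
rewrite [hh i n.+2 x]hh_S [hh i n.+1 x]hh_S -sumrB.
rewrite (eq_bigr (fun y => w x y * ((if y == (i, 0%N) then 1 else hh i n.+1 y)
   - (if y == (i, 0%N) then 1 else hh i n y)))); last by move=> y _; rewrite mulrBr.
rewrite exprS; apply: step_bound; first exact: exprn_ge0 rho_ge0.
move=> y _; right; case: ifP => _; last exact: IH.
by rewrite subrr nc0 exprn_ge0 // rho_ge0.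
Qed.

Lemma HH_approx i x n : nc (hh i n x - HH i x) <= 2%:R * ee n.
Proof.
apply: le_trans (nc_ReIm _) _; rewrite ReB ImB /HH /=.
have hre : `|complex.Re (hh i n x) - limr (fun n => complex.Re (hh i n x))| <= ee n.
  apply: (real_lim (fun n => complex.Re (hh i n x))) => m.
  rewrite -ReB; apply: le_trans (nc_Re _) _; apply: le_trans (hh_diff i m x) _.
  exact: rhoS_le.
have him : `|complex.Im (hh i n x) - limr (fun n => complex.Im (hh i n x))| <= ee n.
  apply: (real_lim (fun n => complex.Im (hh i n x))) => m.
  rewrite -ImB; apply: le_trans (nc_Im _) _; apply: le_trans (hh_diff i m x) _.
  exact: rhoS_le.
lra.
Qed.

Lemma nc_tri z u v : nc (z - v) <= nc (z - u) + nc (u - v).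
Proof. have -> : z - v = (z - u) + (u - v) by rewrite addrA subrK. exact: ncD. Qed.
Lemma ncBle z u : nc (z - u) <= nc z + nc u.
Proof. by apply: le_trans (ncD _ _) _; rewrite ncN. Qed.

Lemma lim_eq (A B : R[i]) (K : R) : (forall n, nc (A - B) <= K * ee n) -> A = B.
Proof.
move=> H; apply/eqP; rewrite -subr_eq0; apply/eqP/nc_eq0.
apply/le_anti; rewrite nc_ge0 andbT.
apply: (lim0 _ (K * (1 - rho)^-1)) => n; rewrite -mulrA; exact: H.
Qed.

Lemma HH_unique i x j y : (forall n, hh i n x = hh j n y) -> HH i x = HH j y.
Proof.
move=> H; apply: (lim_eq _ _ 4%:R) => n.
apply: le_trans (nc_tri _ (hh i n x) _) _.
rewrite ncB {2}H; have := HH_approx i x n; have := HH_approx j y n; lra.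
Qed.

Lemma HH_harm i x : HH i x =
  \sum_(y <- neighbours x) w x y * (if y == (i, 0%N) then 1 else HH i y).
Proof.
apply: (lim_eq _ _ 4%:R) => n.
apply: le_trans (nc_tri _ (hh i n.+1 x) _) _.
have h1 : nc (HH i x - hh i n.+1 x) <= 2%:R * ee n.
  rewrite ncB; apply: le_trans (HH_approx _ _ _) _; have := eeS_le n; lra.
have h2 : nc (hh i n.+1 x - \sum_(y <- neighbours x) w x y * (if y == (i, 0%N) then 1 else HH i y)) <= rho * (2%:R * ee n).
  rewrite hh_S -sumrB.
  rewrite (eq_bigr (fun y => w x y * ((if y == (i, 0%N) then 1 else hh i n y)
     - (if y == (i, 0%N) then 1 else HH i y)))); last by move=> y _; rewrite mulrBr.
  apply: step_bound; first by have := ee_ge0 n; lra.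
  move=> y _; right; case: ifP => _; last exact: HH_approx.
  by rewrite subrr nc0; have := ee_ge0 n; lra.
have := rho_lt1; have := rho_ge0; have := ee_ge0 n; nra.
Qed.

Lemma HH_bound i x : nc (HH i x) <= 1.
Proof.
rewrite -subr_le0; apply: (lim0 _ (2%:R * (1 - rho)^-1)) => n; rewrite -mulrA -/(ee n).
have := nc_tri (HH i x) (hh i n x) 0; rewrite !subr0 ncB.
have := HH_approx i x n; have := hh_bound i n x; lra.
Qed.

Lemma uniq_zero (T : state -> Prop) (d : state -> R[i]) (M : R) :
  (forall x, T x -> nc (d x) <= M) ->
  (forall x, T x -> forall K, 0 <= K -> (forall y, T y -> nc (d y) <= K) ->
     nc (d x) <= rho * K) ->
  forall x, T x -> d x = 0.
Proof.
move=> H1 H2.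
have hn n : forall x, T x -> nc (d x) <= `|M| * rho ^+ n.
  elim: n => [|n IH] x Tx; first by rewrite expr0 mulr1 (le_trans (H1 x Tx)) // ler_norm.
  apply: le_trans (H2 x Tx _ _ IH) _; first by rewrite mulr_ge0 ?exprn_ge0 ?rho_ge0.
  by rewrite exprS mulrCA.
move=> x Tx; apply: nc_eq0; apply/le_anti; rewrite nc_ge0 andbT.
by apply: (lim0 _ `|M|) => n; exact: hn.
Qed.

Lemma if_t (A : Type) (x y : A) : (if true then x else y) = x. Proof. by []. Qed.
Lemma if_f (A : Type) (x y : A) : (if false then x else y) = y. Proof. by []. Qed.
Ltac btac := rewrite ?xpair_eqE;
  repeat match goal with
  | |- context [(?a == ?b)%N] =>
      (have -> : (a == b)%N = true by apply/eqP; lia) ||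
      (have -> : (a == b)%N = false by apply/eqP; lia)
  end; rewrite ?andbF ?andbT ?andFb ?andTb ?if_t ?if_f.

Lemma w_shift k j y1 y2 : w (k.+2, j) (y1.+1, y2) = w (k.+1, j) (y1, y2).
Proof. by rewrite !w_eq r_shift qt_shift. Qed.
Lemma eq_shift y1 y2 i : ((y1.+1, y2) == (i.+1, 0%N)) = ((y1, y2) == (i, 0%N)).
Proof. by rewrite !xpair_eqE eqSS. Qed.
Lemma w_zero k j : w (k.+1, j.+1) (k, j.+1) = 0.
Proof. by rewrite w_eq r1_3 rmorph0 mul0r. Qed.

Lemma hh_shift n i k j : (i < k)%N -> hh i n (k, j) = hh i.+1 n (k.+1, j).
Proof.
elim: n k j => [|n IH] k j hik; first by [].
case: k hik => [//|k] hik.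
rewrite !hh_S.
have -> : neighbours (k.+1, j) = [:: (k.+2, j); (k.+1, j.+1); (k, j); (k.+1, j.-1)] by [].
have -> : neighbours (k.+2, j) = [:: (k.+3, j); (k.+2, j.+1); (k.+1, j); (k.+2, j.-1)] by [].
rewrite !big_cons !big_nil !w_shift !eq_shift.
have e3 : w (k.+1, j) (k, j) * (if (k, j) == (i, 0%N) then 1 else hh i n (k, j)) =
          w (k.+1, j) (k, j) * (if (k, j) == (i, 0%N) then 1 else hh i.+1 n (k.+1, j)).
  case: (ltnP i k) => hik'; first by rewrite IH.
  have -> : k = i by lia.
  case: j => [|j]; first by rewrite eqxx.
  by rewrite w_zero !mul0r.
rewrite e3 !IH //; lia.
Qed.

Lemma HH_shift i k j : (i < k)%N -> HH i (k, j) = HH i.+1 (k.+1, j).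
Proof. by move=> h; apply: HH_unique => n; exact: hh_shift. Qed.

Definition g := HH 0 (1%N, 0%N).
Lemma HG i : HH i (i.+1, 0%N) = g.
Proof. by elim: i => [//|i IH]; rewrite -HH_shift. Qed.

Lemma nc_g : nc g <= 1. Proof. exact: HH_bound. Qed.

Lemma HH_mult i x : (i.+1 < x.1)%N -> HH i x = g * HH i.+1 x.
Proof.
move=> hx; apply/eqP; rewrite -subr_eq0; apply/eqP; move: x hx.
apply: (uniq_zero (fun x => (i.+1 < x.1)%N) (fun x => HH i x - g * HH i.+1 x) 2%:R).
  move=> x _; apply: le_trans (ncBle _ _) _; rewrite ncM.
  have := HH_bound i x; have := HH_bound i.+1 x; have := nc_g; have := nc_ge0 g;
  have := nc_ge0 (HH i.+1 x); nra.
move=> [k j] hk K hK HK; rewrite /= in hk.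
change (nc (HH i (k, j) - g * HH i.+1 (k, j)) <= rho * K).
rewrite (HH_harm i) (HH_harm i.+1) mulr_sumr -sumrB.
rewrite (eq_bigr (fun y => w (k, j) y * ((if y == (i, 0%N) then 1 else HH i y)
   - g * (if y == (i.+1, 0%N) then 1 else HH i.+1 y)))); last first.
  by move=> y _; rewrite mulrCA -mulrBr.
apply: step_bound => // y.
case: k hk => [//|k] hk.
rewrite /= !in_cons in_nil orbF => /or4P[] /eqP ->.
- right; btac; apply: HK => /=; lia.
- right; btac; apply: HK => /=; lia.
- case: (ltnP i.+1 k) => hk'.
    right; btac; apply: HK => /=; lia.
  have -> : k = i.+1 by lia.
  case: j HK => [|j] HK.
    by right; btac; rewrite HG mulr1 subrr nc0.
  by left; exact: w_zero.
- right; btac; apply: HK => /=; lia.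
Qed.

Lemma HH_pow m i : HH i ((i.+1 + m)%N, 0%N) = g ^+ m.+1.
Proof.
elim: m i => [|m IH] i; first by rewrite addn0 HG expr1.
rewrite HH_mult; last by rewrite /=; lia.
have -> : (i.+1 + m.+1 = i.+2 + m)%N by lia.
by rewrite (IH i.+1) [RHS]exprS.
Qed.

Lemma HH_pow' i k : (i < k)%N -> HH i (k, 0%N) = g ^+ (k - i).
Proof.
move=> h; have e : k = (i.+1 + (k - i.+1))%N by lia.
rewrite {1}e HH_pow; congr (_ ^+ _); lia.
Qed.

Lemma ImD (z u : R[i]) : complex.Im (z + u) = complex.Im z + complex.Im u.
Proof. by case: z => ? ?; case: u => ? ?. Qed.
Lemma ImR (r : R) : complex.Im r%:C = 0. Proof. by []. Qed.
Lemma Im_sq (z : R[i]) : complex.Im (z ^+ 2) = 2%:R * complex.Re z * complex.Im z.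
Proof. case: z => x y; rewrite expr2 /=; ring. Qed.
Lemma Re_sqrtc (z : R[i]) : 0 <= complex.Re (sqrtc z).
Proof. by case: z => x y; rewrite /= sqrtr_ge0. Qed.
Lemma nc_def z : nc z = Num.sqrt (complex.Re z ^+ 2 + complex.Im z ^+ 2).
Proof. by case: z. Qed.
Lemma nc_le z u : complex.Re z ^+ 2 + complex.Im z ^+ 2 <= complex.Re u ^+ 2 + complex.Im u ^+ 2 ->
  nc z <= nc u.
Proof. by rewrite !nc_def; exact: ler_wsqrtr. Qed.
Lemma C_neq0 (l : R) : 0 < l -> l%:C != 0 :> R[i].
Proof. move=> hl; apply/eqP => /(congr1 (@complex.Re R)); rewrite ReR /=; lra. Qed.
Lemma nat_C n : (n%:R : R[i]) = (n%:R : R)%:C.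
Proof. by rewrite rmorph_nat. Qed.

Ltac side := repeat (apply/andP; split); first [ assumption | done | idtac ].

Lemma phi_quad (l m : R) (s : R[i]) : 0 < l ->
  l%:C * phiBP l m s ^+ 2 - (l%:C + m%:C + s) * phiBP l m s + m%:C = 0.
Proof.
move=> hl; rewrite /phiBP.
set b := l%:C + m%:C + s.
set r := sqrtc _.
have hr : r ^+ 2 = b ^+ 2 - 4%:R * l%:C * m%:C by exact: sqr_sqrtc.
have hl' := @C_neq0 l hl.
have h2 : 2%:R != 0 :> R[i] by rewrite pnatr_eq0.
have h4 : 4%:R != 0 :> R[i] by rewrite pnatr_eq0.
have -> : l%:C * ((b - r) / (2%:R * l%:C)) ^+ 2 - b * ((b - r) / (2%:R * l%:C)) + m%:C
   = (r ^+ 2 - (b ^+ 2 - 4%:R * l%:C * m%:C)) / (4%:R * l%:C) by field.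
by rewrite hr subrr mul0r.
Qed.

Lemma phi_bound (l m : R) (s : R[i]) : 0 < l -> 0 < m -> 0 < complex.Re s ->
  nc (phiBP l m s) <= 1.
Proof.
move=> hl hm hs; rewrite /phiBP.
set b := l%:C + m%:C + s.
set r := sqrtc _.
have hr : r ^+ 2 = b ^+ 2 - 4%:R * l%:C * m%:C by exact: sqr_sqrtc.
have hl' := @C_neq0 l hl.
have h2 : 2%:R != 0 :> R[i] by rewrite pnatr_eq0.
have h4 : 4%:R != 0 :> R[i] by rewrite pnatr_eq0.
set p := (b - r) / (2%:R * l%:C).
pose p' := (b + r) / (2%:R * l%:C).
have hpp : p * p' = (m / l)%:C.
  have -> : p * p' = (b ^+ 2 - r ^+ 2) / (4%:R * l%:C ^+ 2).
    by rewrite /p /p'; field; side.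
  by rewrite hr rmorphM fmorphV /=; field; side.
have hsum : p + p' = b / l%:C by rewrite /p /p'; field; side.
have hnp : nc p * nc p' = m / l.
  by rewrite -ncM hpp ncR ger0_norm // divr_ge0 // ltW.
have hReb : complex.Re b = l + m + complex.Re s by rewrite /b !ReD !ReR.
have hns : (l + m + complex.Re s) / l <= nc (p + p').
  rewrite hsum ncM ncV ncR ger0_norm ?(ltW hl) // ler_pM2r ?invr_gt0 //.
  by rewrite -hReb nc_geRe.
have hle : nc p <= nc p'.
  rewrite /p /p' !ncM ler_wpM2r ?nc_ge0 //.
  apply: nc_le; rewrite ReB ImB [complex.Re (b + r)]ReD [complex.Im (b + r)]ImD.
  have hu := Re_sqrtc (b ^+ 2 - 4%:R * l%:C * m%:C); rewrite -/r in hu.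
  have hIm : complex.Im (r ^+ 2) = complex.Im (b ^+ 2).
    by rewrite hr ImB nat_C -!rmorphM ImR subr0.
  rewrite !Im_sq in hIm.
  have hx : 0 < complex.Re b by rewrite hReb; lra.
  move: hu hx hIm; set x := complex.Re b; set y := complex.Im b;
    set u := complex.Re r; set v := complex.Im r => hu hx hIm.
  suff : 0 <= x * u + y * v by nra.
  case: (ltrgtP u 0) => hu0; first by lra.
    have hk : u * (x * u + y * v) = x * (u ^+ 2 + y ^+ 2).
      have huv : u * v = x * y by nra.
      rewrite mulrDr [u * (y * v)]mulrCA huv; ring.
    have : 0 <= u * (x * u + y * v) by rewrite hk mulr_ge0 ?addr_ge0 ?sqr_ge0 // ltW.
    by rewrite pmulr_rge0.
  have hy : y = 0.
    have : x * y = 0 by rewrite hu0 in hIm; nra.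
    by move/eqP; rewrite mulf_eq0 gt_eqF //= => /eqP.
  by rewrite hu0 hy; lra.
rewrite leNgt; apply/negP => h1.
have hp2 : 1 < nc p' by lra.
have hprod : 0 < (nc p - 1) * (nc p' - 1) by rewrite mulr_gt0 // subr_gt0.
have e : (l + m + complex.Re s) / l = 1 + m / l + complex.Re s / l.
  by field; rewrite gt_eqF.
have hsl : 0 < complex.Re s / l by rewrite divr_gt0.
have := ncD p p'.
have : (nc p - 1) * (nc p' - 1) = nc p * nc p' - nc p - nc p' + 1 by ring.
lra.
Qed.

Lemma ReMR (r : R) (z : R[i]) : complex.Re (r%:C * z) = r * complex.Re z.
Proof. case: z => x y /=; ring. Qed.

Definition sarg := lam1%:C * (1 - g) + alpha.
Definition psi := phiBP lam2 mu2 sarg.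

Lemma s_pos : 0 < complex.Re sarg.
Proof.
rewrite /sarg ReD ReMR ReB.
have := nc_geRe g; have := nc_g.
have -> : complex.Re (1 : R[i]) = 1 by [].
move=> h1 h2; have : 0 <= lam1 * (1 - complex.Re g) by rewrite mulr_ge0 //; lra'.
lra2.
Qed.

Lemma psi_quad : lam2%:C * psi ^+ 2 - (lam2%:C + mu2%:C + sarg) * psi + mu2%:C = 0.
Proof. exact: phi_quad. Qed.
Lemma nc_psi : nc psi <= 1.
Proof. exact: phi_bound s_pos. Qed.

Definition v i (x : state) := g ^+ (x.1 - i) * psi ^+ x.2.
Lemma ncX z n : nc (z ^+ n) = nc z ^+ n.
Proof. elim: n => [|n IH]; first by rewrite !expr0 nc1. by rewrite !exprS ncM IH. Qed.
Lemma nc_v i x : nc (v i x) <= 1.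
Proof.
rewrite /v ncM !ncX; apply: mulr_ile1; rewrite ?exprn_ge0 ?nc_ge0 //;
  apply: exprn_ile1; rewrite ?nc_ge0 ?nc_g ?nc_psi //.
Qed.

Lemma v_harm i k j : (i <= k)%N -> v i (k.+1, j.+1) =
  \sum_(y <- neighbours (k.+1, j.+1)) w (k.+1, j.+1) y * v i y.
Proof.
move=> hik.
have hD := qa_neq0 (k.+1, j.+1); rewrite qt1 in hD.
have -> : neighbours (k.+1, j.+1) = [:: (k.+2, j.+1); (k.+1, j.+2); (k, j.+1); (k.+1, j)] by [].
rewrite !big_cons big_nil !w_eq r1_1 r1_2 r1_3 r1_4 qt1.
set P := g ^+ (k.+1 - i) * psi ^+ j.
have v0 : v i (k.+1, j.+1) = P * psi by rewrite /v /P /= exprS; ring.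
have v1 : v i (k.+2, j.+1) = P * g * psi.
  by rewrite /v /P /= (subSn (leqW hik)) !exprS; ring.
have v2 : v i (k.+1, j.+2) = P * (psi * psi) by rewrite /v /P /= !exprS; ring.
have v4 : v i (k.+1, j) = P by [].
rewrite v0 v1 v2 v4.
have hl2' := @C_neq0 lam2 hl2.
have e : psi * psi = ((lam2%:C + mu2%:C + sarg) * psi - mu2%:C) / lam2%:C.
  apply: (mulIf hl2'); rewrite divfK //.
  have := psi_quad; rewrite expr2 => hq.
  by apply/eqP; rewrite -subr_eq0 -hq; apply/eqP; ring.
rewrite e /sarg !rmorphD /= rmorph0.
rewrite !rmorphD /= in hD.
field; side.
Qed.

Lemma HH_v i k j : (i < k)%N -> HH i (k, j) = v i (k, j).
Proof.
move=> hik.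
have h0 k' : (i < k')%N -> HH i (k', 0%N) = v i (k', 0%N).
  by move=> h; rewrite HH_pow' // /v /= expr0 mulr1.
case: j => [|j]; first exact: h0.
apply/eqP; rewrite -subr_eq0; apply/eqP.
suff H : forall x, ((i < x.1)%N && (0 < x.2)%N) -> HH i x - v i x = 0.
  by apply: H; rewrite /= hik.
apply: (uniq_zero (fun x => (i < x.1)%N && (0 < x.2)%N) (fun x => HH i x - v i x) 2%:R).
  move=> x _; apply: le_trans (ncBle _ _) _.
  have := HH_bound i x; have := nc_v i x; lra.
move=> [k' j'] /andP[hk hj] K hK HK; rewrite /= in hk hj.
case: k' hk => [//|k'] hk; case: j' hj => [//|j'] hj.
change (nc (HH i (k'.+1, j'.+1) - v i (k'.+1, j'.+1)) <= rho * K).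
rewrite (HH_harm i) (@v_harm i k' j'); last by lia.
rewrite -sumrB.
rewrite (eq_bigr (fun y => w (k'.+1, j'.+1) y * ((if y == (i, 0%N) then 1 else HH i y)
   - v i y))); last by move=> y _; rewrite mulrBr.
apply: step_bound => // y.
rewrite /= !in_cons in_nil orbF => /or4P[] /eqP ->.
- right; btac; apply: HK; rewrite /=; apply/andP; split; lia.
- right; btac; apply: HK; rewrite /=; apply/andP; split; lia.
- by left; exact: w_zero.
- case: j' hj HK => [|j'] hj HK.
    by right; btac; rewrite h0 // subrr nc0.
  right; btac; apply: HK; rewrite /=; apply/andP; split; lia.
Qed.

Lemma ee_cvg : ee n @[n --> \oo] --> (0 : R).
Proof.
have hr : `|rho| < 1 by rewrite ger0_norm ?rho_ge0 // rho_lt1.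
have : (1 - rho)^-1 * rho ^+ n @[n --> \oo] --> ((1 - rho)^-1 * 0 : R).
  by apply: cvgMl_tmp; exact: cvg_expr.
by rewrite mulr0.
Qed.

Lemma real_lim_eq (u : nat -> R) (L1 L2 : R) : u @ \oo --> L1 ->
  (forall n, `|u n - L2| <= 2%:R * ee n) -> L1 = L2.
Proof.
move=> hu H.
have c1 : (L2 + 2%:R * ee n) @[n --> \oo] --> (L2 + 2%:R * 0 : R).
  apply: cvgD; first exact: cvg_cst.
  by apply: cvgMl_tmp; exact: ee_cvg.
have c2 : (L2 - 2%:R * ee n) @[n --> \oo] --> (L2 - 2%:R * 0 : R).
  apply: cvgB; first exact: cvg_cst.
  by apply: cvgMl_tmp; exact: ee_cvg.
rewrite mulr0 addr0 in c1; rewrite mulr0 subr0 in c2.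
apply/le_anti/andP; split.
- apply: (ler_cvg_to hu c1); apply: nearW => n; have := H n; rewrite ler_norml; lra.
- apply: (ler_cvg_to c2 hu); apply: nearW => n; have := H n; rewrite ler_norml; lra.
Qed.

Lemma main_sec (i : nat) (G : R[i])
  (hG : hitLST lam1 lam2 mu1 mu2 (pred1 (i, 0%N)) alpha (i.+1, 0%N) G) :
  ((lam1 + lam2 + mu1)%:C + alpha) * G
  = mu1%:C + lam1%:C * G ^+ 2
    + lam2%:C * G * phiBP lam2 mu2 (lam1%:C * (1 - G) + alpha).
Proof.
have hGg : G = g.
  rewrite -(HG i); case: hG => hre him.
  apply/eqP; rewrite eq_complex; apply/andP; split; apply/eqP.
  - apply: (real_lim_eq _ _ _ hre) => n.
    rewrite -ReB; apply: le_trans (nc_Re _) (HH_approx _ _ _).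
  - apply: (real_lim_eq _ _ _ him) => n.
    rewrite -ImB; apply: le_trans (nc_Im _) (HH_approx _ _ _).
rewrite hGg -/sarg -/psi.
have E := HH_harm i (i.+1, 0%N).
rewrite HG in E.
have hD := qa_neq0 (i.+1, 0%N); rewrite qt0 in hD.
rewrite (_ : neighbours (i.+1, 0%N) = [:: (i.+2, 0%N); (i.+1, 1%N); (i, 0%N); (i.+1, 0%N)]) in E; last by [].
rewrite !big_cons big_nil !w_eq r0_1 r0_2 r0_3 r0_4 qt0 in E.
move: E; btac => E.
rewrite HH_pow' // HH_v // /v /= in E.
rewrite (_ : (i.+2 - i = 2)%N) in E; last by lia.
rewrite (_ : (i.+1 - i = 1)%N) in E; last by lia.
rewrite {1}E rmorph0 !expr1.
have hD' := hD; rewrite !rmorphD /= in hD'.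
field; side.
Qed.
End C.

Theorem proposition7 (R : realType) (lam1 lam2 mu1 mu2 : R)
  (hl1 : 0 < lam1) (hl2 : 0 < lam2) (hm1 : 0 < mu1) (hm2 : 0 < mu2)
  (alpha : R[i]) (halpha : 0 < complex.Re alpha)
  (i : nat) (G : R[i])
  (hG : hitLST lam1 lam2 mu1 mu2 (pred1 (i, 0%N)) alpha (i.+1, 0%N) G) :
  ((lam1 + lam2 + mu1)%:C + alpha) * G
  = mu1%:C + lam1%:C * G ^+ 2
    + lam2%:C * G * phiBP lam2 mu2 (lam1%:C * (1 - G) + alpha).
Proof.
exact: (@main_sec R lam1 lam2 mu1 mu2 hl1 hl2 hm1 hm2 alpha halpha i G hG).
Qed.
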